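(* Let $\mathrm r=(r_1,\dots,r_d)\in\mathbb{Z}_+^d$ with $\mathrm r>0$, let $x\in\bar S_d^{\mathrm r}$ with smallest solution $\mathrm k=(k_1,\dots,k_d)\in\mathbb{N}^d$ of $(\mathrm r,x)$, and assume that $(\mathrm r,x)$ is a simple system. Then the number of good cyclical permutations of $x$ (i.e. the number of $\mathrm q\in\mathbb{Z}_+^d$, $\mathrm q\le\mathrm k-1_d$, such that $\mathrm k$ is the smallest solution of $(\mathrm r,x_{\mathrm q,\mathrm k})$) is $$\sum_{(j_1,\dots,j_d)\in D}\ \prod_{i=1}^d k_{j_i i},$$ where $k_{ij}=x^{i,j}(k_i)$ for $i,j\in[d]$ and $k_{0i}=r_i$.
   Context: $d\ge2$, $[d]=\{1,\dots,d\}$, $\mathbb N=\{1,2,\dots\}$, $1_d=(1,\dots,1)$. $S_d$: families $x=(x^{(1)},\dots,x^{(d)})$, $x^{(i)}=(x^{i,1},\dots,x^{i,d})$ a $\mathbb{Z}^d$-valued sequence indexed by $\{0,\dots,n_i\}$, $x^{(i)}_0=0$, $x^{i,j}$ nondecreasing for $i\ne j$, $x^{i,i}_{n+1}-x^{i,i}_n\ge-1$; $(n_1,\dots,n_d)$ is its length; $x^{i,j}(n)=x^{i,j}_n$. A solution of $(\mathrm r,x)$ is $\mathrm s\in\mathbb{Z}_+^d$, $\mathrm s\le$ length, with $r_j+\sum_ix^{i,j}(s_i)=0$ for all $j$; the smallest solution is one that is coordinatewise $\le$ all solutions. $\bar S_d^{\mathrm r}$ is the set of $x\in S_d$ whose length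 lies in $\mathbb{N}^d$ and is the smallest solution of $(\mathrm r,x)$, and with $x^{i,i}_k=-k$ for all $k,i$. For $x\in\bar S_d^{\mathrm r}$ with smallest solution $\mathrm k$, $(\mathrm r,x)$ is a simple system if for every $i\in[d]$ there is $k'_i\le k_i-1$ such that $x^{i,j}(k)=0$ for all $0\le k\le k'_i$ and $j\ne i$, and $x^{i,j}(k)=x^{i,j}(k_i)$ for all $k'_i+1\le k\le k_i$ and $j\ne i$ (i.e. for each $i$ the sequences $x^{i,j}$, $j\ne i$, have at most one positive jump, occurring at a common time). Cyclical permutations: for $g$ on $\{0,\dots,m\}$ with $g(0)=0$, $1\le n\le m$, $0\le q\le n-1$: $g_{q,n}(h)=g(q+h)-g(q)$ for $0\le h\le n-q$, $g_{q,n}(h)=g(h-(n-q))+g(n)-g(q)$ for $n-q\le h\le n$, $g_{q,n}(h)=g(h)$ for $h\ge n$; $x_{\mathrm q,\mathrm k}=(x^{(1)}_{q_1,k_1},\dots,x^{(d)}_{q_d,k_d})$. $D$ is the set of vectors $(j_1,\dots,j_d)\in\{0,1,\dots,d\}^d$ coding an elementary forest, i.e. a forest with exactly one vertex of each type $i\in[d]$, where $j_i$ is the type of the parent of the vertex of type $i$ and $j_i=0$ if that vertex is a root; equivalently $j_i\ne i$ and for every $i$ the iterates $i,j_i,j_{j_i},\dots$ eventually reach $0$. *)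

(* Defs.v *)
From mathcomp Require Import all_boot all_order all_algebra.
Set Implicit Arguments. Unset Strict Implicit. Unset Printing Implicit Defensive.
Import Order.TTheory GRing.Theory Num.Theory.
Local Open Scope ring_scope.

(* A family x = (x^(1),...,x^(d)) is represented by  x : 'I_d -> nat -> 'I_d -> int
   with  x i h j = x^{i,j}(h)  (types 1..d are the ordinals 0..d-1);
   together with its length  n : 'I_d -> nat  (x^(i) is indexed by {0,...,n i});
   values of x i h for h > n i are irrelevant. *)
Definition xfam (d : nat) := 'I_d -> nat -> 'I_d -> int.

Definition in_S (d : nat) (x : xfam d) (n : 'I_d -> nat) : Prop :=
  (forall i j, x i 0%N j = 0) /\
  (forall i j, i != j -> forall h, (h < n i)%N -> x i h j <= x i h.+1 j) /\
  (forall i h, (h < n i)%N -> - 1 <= x i h.+1 i - x i h i).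

Definition is_solution (d : nat) (r : 'I_d -> nat) (x : xfam d)
    (n : 'I_d -> nat) (s : 'I_d -> nat) : bool :=
  [forall i, (s i <= n i)%N] &&
  [forall j, (r j)%:Z + \sum_(i < d) x i (s i) j == 0].

(* s is the smallest solution of (r, x): a solution that is coordinatewise
   below every solution (every solution t satisfies t <= n, so t ranges over
   the finite type of vectors with t i in {0,...,n i}). *)
Definition is_smallest_solution (d : nat) (r : 'I_d -> nat) (x : xfam d)
    (n : 'I_d -> nat) (s : 'I_d -> nat) : bool :=
  is_solution r x n s &&
  [forall t : {dffun forall i : 'I_d, 'I_(n i).+1},
     is_solution r x n (fun i => nat_of_ord (t i)) ==> [forall i, (s i <= t i)%N]].

Definition in_Sbar (d : nat) (r : 'I_d -> nat) (x : xfam d) (n : 'I_d -> nat) : Prop :=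
  in_S x n /\ (forall i, (0 < n i)%N) /\ is_smallest_solution r x n n /\
  (forall i h, (h <= n i)%N -> x i h i = - (h%:Z)).

Definition simple_system (d : nat) (x : xfam d) (k : 'I_d -> nat) : Prop :=
  forall i : 'I_d, exists k' : nat, (k' <= k i - 1)%N /\
    (forall h j, (h <= k')%N -> j != i -> x i h j = 0) /\
    (forall h j, (k'.+1 <= h <= k i)%N -> j != i -> x i h j = x i (k i) j).

Definition cycf (g : nat -> int) (q n h : nat) : int :=
  if (h <= n - q)%N then g (q + h)%N - g q
  else if (h <= n)%N then g (h - (n - q))%N + g n - g q
  else g h.

Definition cyc (d : nat) (x : xfam d) (q k : 'I_d -> nat) : xfam d :=
  fun i h j => cycf (fun m => x i m j) (q i) (k i) h.

(* Elementary forests: j : 'I_d -> option 'I_d, j i = None means the vertex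
   of type i is a root (code 0), j i = Some a means its parent has type a. *)
Definition forest_step (d : nat) (j : {ffun 'I_d -> option 'I_d}) (o : option 'I_d)
  : option 'I_d := if o is Some a then j a else None.

(* j i <> i and the iterates i, j_i, j_{j_i}, ... reach 0 (= None); since there
   are only d types, reaching None happens within d steps iff it happens at all. *)
Definition in_D (d : nat) (j : {ffun 'I_d -> option 'I_d}) : bool :=
  [forall i, (j i != Some i) &&
     [exists m : 'I_d.+1, iter m (forest_step j) (Some i) == None]].

Definition kcoef (d : nat) (r : 'I_d -> nat) (x : xfam d) (k : 'I_d -> nat)
  (o : option 'I_d) (i : 'I_d) : int :=
  if o is Some a then x a (k a) i else (r i)%:Z.

(* Main.v *)
Require Import Defs.
From mathcomp Require Import all_boot all_order all_algebra.
From mathcomp Require Import zify.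
From Stdlib Require Import IndefiniteDescription.
Set Implicit Arguments. Unset Strict Implicit. Unset Printing Implicit Defensive.
Import Order.TTheory GRing.Theory Num.Theory.

Definition Sl (d : nat) (r : 'I_d -> nat) (c : 'I_d -> 'I_d -> nat)
  (L : {ffun 'I_d -> 'I_d}) (n : nat) (i : 'I_d) : nat :=
  r i + \sum_(a | (L a < n)%N) c a i.

Definition good (d : nat) (r : 'I_d -> nat) (c : 'I_d -> 'I_d -> nat)
  (L : {ffun 'I_d -> 'I_d}) (t : 'I_d -> nat) : bool :=
  [forall i, (t i < Sl r c L (L i) i)%N && ((0 < L i)%N ==> (Sl r c L (L i).-1 i <= t i)%N)].

Lemma Sl_mono d r c (L : {ffun 'I_d -> 'I_d}) m n i : (m <= n)%N -> (@Sl d r c L m i <= Sl r c L n i)%N.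
Proof.
move=> mn; rewrite /Sl leq_add2l [X in (X <= _)%N]big_mkcond [X in (_ <= X)%N]big_mkcond.
apply: leq_sum => a _; case: ifP => // h; rewrite (leq_trans h mn) //.
Qed.

Lemma Sl_eq d r c (L L' : {ffun 'I_d -> 'I_d}) n i : (forall a, (L a < n)%N = (L' a < n)%N) ->
  @Sl d r c L n i = Sl r c L' n i.
Proof. by move=> h; rewrite /Sl; congr (_ + _); apply: eq_bigl => a; rewrite h. Qed.

Lemma good_uniq_aux d r c (L L' : {ffun 'I_d -> 'I_d}) t : good r c L t -> good r c L' t ->
  forall n, (forall a, (L a < n)%N = (L' a < n)%N) ->
  forall a, (L a == n :> nat) -> (L' a == n :> nat).
Proof.
move=> /forallP gL /forallP gL' n IH a /eqP La.
have := IH a; rewrite La ltnn => /esym/negbT; rewrite -leqNgt leq_eqVlt => /orP[/eqP->//|lt].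
have /andP[+ _] := gL a; have /andP[_ /implyP h] := gL' a.
have h2 := h (leq_ltn_trans (leq0n _) lt).
have h3 : (Sl r c L' n a <= t a)%N.
  by apply: leq_trans h2; apply: Sl_mono; move: lt; case: (L' a : nat).
rewrite La (Sl_eq _ _ _ IH) => h4; have := leq_trans h4 h3; by rewrite ltnn.
Qed.

Lemma good_uniq d r c (L L' : {ffun 'I_d -> 'I_d}) t : good r c L t -> good r c L' t -> L = L'.
Proof.
move=> g g'.
have key : forall n a, (L a < n)%N = (L' a < n)%N.
  elim=> [|n IH] a; first by rewrite !ltn0.
  rewrite !ltnS [(L a <= _)%N]leq_eqVlt [(L' a <= _)%N]leq_eqVlt IH; congr (_ || _).
  apply/idP/idP => h; first exact: (good_uniq_aux g g' IH h).
  by apply: (good_uniq_aux g' g _ h) => b; rewrite IH.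
apply/ffunP => a; apply: val_inj; apply/eqP; rewrite eqn_leq.
move: (key (L a).+1 a) (key (L' a).+1 a); rewrite !ltnS !leqnn => h1 h2.
by rewrite -h1 h2.
Qed.

Definition kk d (r : 'I_d -> nat) (c : 'I_d -> 'I_d -> nat) (j : 'I_d) : nat :=
  r j + \sum_(i | i != j) c i j.

Definition sol d (r : 'I_d -> nat) (c : 'I_d -> 'I_d -> nat) (t s : 'I_d -> nat) : Prop :=
  forall j, s j = r j + \sum_(i | i != j) (if (t i < s i)%N then c i j else 0%N).

Lemma good_act d r c (L : {ffun 'I_d -> 'I_d}) t s :
  good r c L t -> sol r c t s -> forall i, (t i < s i)%N.
Proof.
move=> /forallP g hs.
suff H : forall n i, (L i < n)%N -> (t i < s i)%N by move=> i; apply: (H (L i).+1).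
elim=> [|n IH] i //; rewrite ltnS => Lin.
have /andP[h _] := g i; apply: (leq_trans h); rewrite hs /Sl leq_add2l.
rewrite big_mkcond [X in (_ <= X)%N]big_mkcond; apply: leq_sum => a _.
case: ifP => // La; have -> : a != i by apply/eqP => e; move: La; rewrite e ltnn.
by rewrite IH // (leq_trans La Lin).
Qed.

Lemma good_sol d r c (L : {ffun 'I_d -> 'I_d}) t s :
  good r c L t -> sol r c t s -> forall i, s i = kk r c i.
Proof.
move=> g hs i; rewrite hs /kk; congr (_ + _); apply: eq_bigr => a _.
by rewrite (good_act g hs).
Qed.

Fixpoint Pact d (r : 'I_d -> nat) (c : 'I_d -> 'I_d -> nat) (t : 'I_d -> nat)
   (m : nat) (i : 'I_d) : bool :=
  if m is m'.+1 then (t i < r i + \sum_(a | (a != i) && Pact r c t m' a) c a i)%N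
  else false.

Lemma Pact_mono d r c t m (i : 'I_d) : Pact r c t m i -> Pact r c t m.+1 i.
Proof.
elim: m i => [|m IH] i //= h; apply: (leq_trans h); rewrite leq_add2l.
rewrite big_mkcond [X in (_ <= X)%N]big_mkcond; apply: leq_sum => a _.
case: (a != i); last by [].
rewrite !andTb; case: ifP => // /IH hP; by move: hP => /= ->.
Qed.

Lemma Pact_monoLe d r c t m n (i : 'I_d) : (m <= n)%N -> Pact r c t m i -> Pact r c t n i.
Proof.
move=> /subnK <-; elim: (n - m)%N => [|p IH] h; first by rewrite add0n.
by rewrite addSn; apply: Pact_mono; apply: IH.
Qed.

Lemma Pact_stab d r c t : exists2 m, (m <= d)%N & forall i : 'I_d, Pact r c t m.+1 i = Pact r c t m i.
Proof.
case: (boolP [exists m : 'I_d.+1, [forall i, Pact r c t m.+1 i == Pact r c t m i]]).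
  move=> /existsP[m /forallP h]; exists (m : nat); first by rewrite -ltnS ltn_ord.
  by move=> i; have /eqP := h i.
move/existsPn => hn.
have card_ge : forall m, (m <= d.+1)%N -> (m <= #|[pred i | Pact r c t m i]|)%N.
  elim=> [|m IH] // lm.
  apply: (leq_ltn_trans (IH (ltnW lm))); apply: proper_card; rewrite properE.
  apply/andP; split; first by apply/subsetP => i; rewrite !inE; apply: Pact_mono.
  have /forallPn[i hi] := hn (Ordinal lm).
  apply/negP => /subsetP /(_ i); rewrite !inE => h.
  have hm := @Pact_mono d r c t m i.
  move: hi h hm; case: (Pact r c t m.+1 i); case: (Pact r c t m i) => //.
    by move=> _ /(_ isT).
  by move=> _ _ /(_ isT).
have := card_ge d.+1 (leqnn _); have := max_card [pred i | Pact r c t d.+1 i].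
by rewrite card_ord => h1 h2; have := leq_trans h2 h1; rewrite ltnn.
Qed.

Lemma Pact_stable_d d r c t (i : 'I_d) : Pact r c t d.+1 i = Pact r c t d i.
Proof.
have [m md hm] := Pact_stab r c t.
suff H : forall n j, Pact r c t (m + n) j = Pact r c t m j.
  transitivity (Pact r c t (m + (d - m).+1) i); first by rewrite addnS subnKC.
  transitivity (Pact r c t (m + (d - m)) i); last by rewrite subnKC.
  by rewrite !H.
elim=> [|n IH] j; first by rewrite addn0.
rewrite addnS -hm /=; congr (_ < _)%N; congr (_ + _); apply: eq_bigl => a.
by rewrite IH.
Qed.

Lemma exists_good d r c t :
  (forall i, (t i < kk r c i)%N) ->
  (forall s, (forall i, (s i <= kk r c i)%N) -> sol r c t s -> forall i, (kk r c i <= s i)%N) ->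
  exists L : {ffun 'I_d -> 'I_d}, good r c L t.
Proof.
move=> tk hmin.
pose s i := (r i + \sum_(a | (a != i) && Pact r c t d a) c a i)%N.
have ts i : (t i < s i)%N = Pact r c t d i by rewrite -Pact_stable_d.
have hsol : sol r c t s.
  move=> j; rewrite {1}/s; congr (_ + _); rewrite big_mkcondr /=.
  by apply: eq_bigr => a _; rewrite ts.
have sk i : (s i <= kk r c i)%N.
  rewrite leq_add2l big_mkcondr /=; apply: leq_sum => a _; by case: ifP.
have allP i : Pact r c t d i.
  by rewrite -ts; apply: (leq_trans (tk i)); apply: hmin.
have ex i : exists m, Pact r c t m.+1 i.
  have d0 : (0 < d)%N by apply: leq_ltn_trans (leq0n i) (ltn_ord i).
  by exists d.-1; rewrite prednK.
pose Ln i := ex_minn (ex i).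
have LnP i : Pact r c t (Ln i).+1 i by rewrite /Ln; case: ex_minnP.
have Lnmin i m : Pact r c t m.+1 i -> (Ln i <= m)%N by rewrite /Ln; case: ex_minnP => ? _; apply.
have Lnlt i : (Ln i < d)%N.
  have d0 : (0 < d)%N by apply: leq_ltn_trans (leq0n i) (ltn_ord i).
  apply: (leq_ltn_trans (Lnmin i d.-1 _)); first by rewrite prednK.
  by rewrite prednK.
have PL n a : Pact r c t n a = (Ln a < n)%N.
  apply/idP/idP; last by move=> h; apply: Pact_monoLe h (LnP a).
  by case: n => // n /Lnmin; rewrite ltnS.
exists [ffun i => Ordinal (Lnlt i)]; apply/forallP => i; rewrite ffunE /=.
have e n : (n <= Ln i)%N -> Sl r c [ffun i => Ordinal (Lnlt i)] n i =
           (r i + \sum_(a | (a != i) && Pact r c t n a) c a i)%N.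
  move=> ni; rewrite /Sl; congr (_ + _); apply: eq_bigl => a.
  rewrite ffunE /= PL; case: eqP => // ->; rewrite ltnNge ni //.
rewrite e //; apply/andP; split; first exact: (LnP i).
apply/implyP => L0.
rewrite e ?leq_pred // leqNgt; apply/negP => h.
have : Pact r c t (Ln i).-1.+1 i by [].
by rewrite prednK // PL ltnn.
Qed.
Lemma card_interval n lo hi : (lo <= hi <= n)%N ->
  #|[pred u : 'I_n | (lo <= u) && (u < hi)]| = (hi - lo)%N.
Proof.
move=> /andP[lh hn].
rewrite -sum1_card (big_mkcond (fun u : 'I_n => (lo <= u) && (u < hi))).
rewrite -(big_mkord xpredT (fun u => if (lo <= u) && (u < hi) then 1 else 0)%N).
rewrite (big_cat_nat _ (n := lo)) //= ?(leq_trans lh hn) //.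
rewrite (big_cat_nat _ (m := lo) (n := hi)) //=.
rewrite big1_seq ?add0n; last first.
  move=> u; rewrite mem_index_iota => /andP[_ /andP[_ h]]; by rewrite leqNgt h.
rewrite [X in (_ + X)%N]big1_seq ?addn0; last first.
  move=> u; rewrite mem_index_iota => /andP[_ /andP[h _]]; by rewrite ltnNge h andbF.
rewrite (eq_big_nat _ _ (F2 := fun _ => 1%N)); first by rewrite sum_nat_const_nat muln1.
by move=> u /andP[-> ->].
Qed.

Definition wL d (r : 'I_d -> nat) (c : 'I_d -> 'I_d -> nat) (L : {ffun 'I_d -> 'I_d}) i :=
  if (L i == 0 :> nat) then r i else \sum_(a | ((L a).+1 == L i)%N) c a i.

Lemma Sl_le_kk d r c (L : {ffun 'I_d -> 'I_d}) i : (Sl r c L (L i) i <= kk r c i)%N.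
Proof.
rewrite leq_add2l big_mkcond [X in (_ <= X)%N]big_mkcond; apply: leq_sum => a _.
case: ifP => // h; case: eqP => //= e; by move: h; rewrite e ltnn.
Qed.

Lemma Sl_diff d r c (L : {ffun 'I_d -> 'I_d}) i :
  (Sl r c L (L i) i - (if (0 < L i)%N then Sl r c L (L i).-1 i else 0))%N = wL r c L i.
Proof.
rewrite /wL /Sl; case: (L i) => [[|n] /= _].
  by rewrite subn0 big_pred0 ?addn0.
rewrite subnDl (bigID (fun a => (L a < n)%N)) /=.
rewrite (eq_bigl (fun a => (L a < n)%N)); last first.
  move=> a; apply/idP/idP => [/andP[_ ->]//|h]; by rewrite h andbT ltnS ltnW.
rewrite addKn; apply: eq_bigl => a; by rewrite eqSS ltnS -leqNgt eqn_leq.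
Qed.

Lemma card_good d r c (L : {ffun 'I_d -> 'I_d}) (k : 'I_d -> nat)
  (hk : forall i, k i = kk r c i) :
  #|[pred t : {dffun forall i : 'I_d, 'I_(k i)} | good r c L (fun i => nat_of_ord (t i))]|
  = \prod_i wL r c L i.
Proof.
pose lo i := if (0 < L i)%N then Sl r c L (L i).-1 i else 0%N.
pose hi i := Sl r c L (L i) i.
pose A i : pred 'I_(k i) := [pred u : 'I_(k i) | (lo i <= u) && (u < hi i)].
transitivity #|(family A : simpl_pred {dffun forall i : 'I_d, 'I_(k i)})|.
  apply: eq_card => t; rewrite !inE; apply/forallP/familyP => h i.
    have /andP[h1 h2] := h i; rewrite /lo /hi; apply/andP; split; last exact: h1.
    by move: h2; rewrite /lo; case: (0 < L i)%N.
  have := h i; rewrite /= /lo /hi => /andP[h1 h2]; apply/andP; split; first exact: h2.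
  by move: h1; rewrite /lo; case: (0 < L i)%N.
rewrite card_family.
have -> : forall s, foldr muln 1%N s = \prod_(x <- s) x.
  elim=> [|a s IH] /=; first by rewrite big_nil.
  by rewrite big_cons IH.
rewrite big_map big_enum /=; apply: eq_bigr => i _.
rewrite card_interval; first exact: Sl_diff.
rewrite hk Sl_le_kk andbT /lo /hi; case: ifP => // L0.
apply: Sl_mono; exact: leq_pred.
Qed.
Lemma sum_opt (T : finType) (Q : pred (option T)) (F : option T -> nat) :
  \sum_(o | Q o) F o = ((if Q None then F None else 0) + \sum_(a | Q (Some a)) F (Some a))%N.
Proof.
rewrite (bigID (fun o => o == None)) /=; congr (_ + _).
  case: ifP => QN.
    by apply: big_pred1 => o; rewrite /= andbC; case: eqP => // ->.
  by apply: big_pred0 => o; case: eqP => [->|]; rewrite ?QN ?andbF.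
rewrite (reindex_omap Some id) /=; last by case=> [a _|/andP[_]] //=; rewrite eqxx.
by apply: eq_bigl => a; rewrite eqxx !andbT.
Qed.
Definition PL d (L : {ffun 'I_d -> 'I_d}) (i : 'I_d) (o : option 'I_d) : bool :=
  if o is Some a then ((L a).+1 == L i)%N else (L i == 0 :> nat).

Lemma iter_None d (j : {ffun 'I_d -> option 'I_d}) m : iter m (forest_step j) None = None.
Proof. by elim: m => //= m ->. Qed.

Lemma fam_inD d (L : {ffun 'I_d -> 'I_d}) (j : {ffun 'I_d -> option 'I_d}) :
  j \in family (fun i => PL L i) -> in_D j.
Proof.
move=> /familyP hj.
have it : forall n i, (L i < n)%N -> iter (L i).+1 (forest_step j) (Some i) = None.
  elim=> [|n IH] i // lt; rewrite iterSr /=.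
  have := hj i; rewrite /PL; case: (j i) => [a|] /=; last by rewrite iter_None.
  move=> /eqP e; rewrite -e; apply: IH; by rewrite -ltnS e.
apply/forallP => i; apply/andP; split.
  have := hj i; rewrite /PL; case: (j i) => [a|] //= /eqP e.
  by apply/negP => /eqP[ai]; move: e; rewrite ai => /esym/n_Sn.
apply/existsP; exists (Ordinal (ltn_ord (L i) : (L i).+1 < d.+1)%N).
by apply/eqP; apply: (it (L i).+1).
Qed.

Lemma fam_uniq d (L L' : {ffun 'I_d -> 'I_d}) (j : {ffun 'I_d -> option 'I_d}) :
  j \in family (fun i => PL L i) -> j \in family (fun i => PL L' i) -> L = L'.
Proof.
move=> /familyP h /familyP h'.
have H : forall n i, (L i < n)%N -> (L i = L' i :> nat).
  elim=> [|n IH] i // lt; have := h i; have := h' i; rewrite /PL.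
  case: (j i) => [a|] /=; last by move=> /eqP -> /eqP ->.
  move=> /eqP <- /eqP e; rewrite -e; congr _.+1; apply: IH; by rewrite -ltnS e.
by apply/ffunP => i; apply: val_inj; apply: (H (L i).+1).
Qed.

Lemma inD_fam d (j : {ffun 'I_d -> option 'I_d}) :
  in_D j -> exists L : {ffun 'I_d -> 'I_d}, j \in family (fun i => PL L i).
Proof.
move=> /forallP hD.
have itd i : iter d (forest_step j) (Some i) = None.
  have /andP[_ /existsP[m /eqP hm]] := hD i.
  transitivity (iter ((d - m) + m) (forest_step j) (Some i)).
    by rewrite subnK // -ltnS ltn_ord.
  by rewrite iterD hm iter_None.
have ex i : exists m, iter m.+1 (forest_step j) (Some i) == None.
  have d0 : (0 < d)%N by apply: leq_ltn_trans (leq0n i) (ltn_ord i).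
  by exists d.-1; rewrite prednK // itd.
pose Ln i := ex_minn (ex i).
have LnP i : iter (Ln i).+1 (forest_step j) (Some i) = None by rewrite /Ln; case: ex_minnP => ? /eqP.
have Lnmin i m : iter m.+1 (forest_step j) (Some i) = None -> (Ln i <= m)%N.
  by rewrite /Ln; case: ex_minnP => ? _ H /eqP; apply: H.
have Lnlt i : (Ln i < d)%N.
  have d0 : (0 < d)%N by apply: leq_ltn_trans (leq0n i) (ltn_ord i).
  apply: (leq_ltn_trans (Lnmin i d.-1 _)); first by rewrite prednK // itd.
  by rewrite prednK.
exists [ffun i => Ordinal (Lnlt i)]; apply/familyP => i; rewrite /PL !ffunE /=.
case E: (j i) => [a|].
  have L0 : (0 < Ln i)%N.
    rewrite lt0n; apply/eqP => e; have := LnP i; by rewrite e /= E.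
  move: L0; case F: (Ln i) => [//|p] _.
  have h1 : iter p.+1 (forest_step j) (Some a) = None.
    by have := LnP i; rewrite F iterSr /= E.
  have h2 : (Ln a <= p)%N by apply: Lnmin.
  have h3 : (Ln i <= (Ln a).+1)%N.
    by apply: Lnmin; rewrite iterSr /= E; apply: LnP.
  by rewrite unfold_in /= ffunE /= eqSS eqn_leq h2 -ltnS -F h3.
rewrite unfold_in /=.
by have := Lnmin i 0; rewrite /= E => /(_ erefl); rewrite leqn0.
Qed.

Definition cn d (r : 'I_d -> nat) (c : 'I_d -> 'I_d -> nat) (o : option 'I_d) (i : 'I_d) : nat :=
  if o is Some a then c a i else r i.

Lemma wL_opt d r c (L : {ffun 'I_d -> 'I_d}) i :
  wL r c L i = \sum_(o | PL L i o) cn r c o i.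
Proof.
rewrite sum_opt /wL /PL /=; case: eqP => h.
  by rewrite big_pred0 ?addn0 // => a; rewrite h.
by rewrite add0n.
Qed.

Lemma forest_sum d r c :
  \sum_(L : {ffun 'I_d -> 'I_d}) \prod_i wL r c L i
  = \sum_(j : {ffun 'I_d -> option 'I_d} | in_D j) \prod_i cn r c (j i) i.
Proof.
transitivity (\sum_(L : {ffun 'I_d -> 'I_d})
   \sum_(j in family (fun i => PL L i)) \prod_i cn r c (j i) i).
  apply: eq_bigr => L _; under eq_bigr do rewrite wL_opt.
  by rewrite (bigA_distr_big_dep _ (fun i o => cn r c o i)).
rewrite (exchange_big_dep (fun j => in_D j)) /=; last by move=> L j _ /fam_inD.
apply: eq_bigr => j hj; have [L0 hL0] := inD_fam hj.
rewrite (big_pred1 L0) // => L /=; apply/idP/eqP => [h|->//].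
exact: fam_uniq h hL0.
Qed.

From mathcomp Require Import zify.
From Stdlib Require Import IndefiniteDescription.
Local Open Scope ring_scope.
Definition Tj (p q n : nat) : nat := if (q <= p)%N then (p - q)%N else (n - q + p)%N.

Lemma Tj_lt p q n : (p < n)%N -> (q < n)%N -> (Tj p q n < n)%N.
Proof. rewrite /Tj; case: ifP; lia. Qed.

Lemma Tj_inj p q q' n : (p < n)%N -> (q < n)%N -> (q' < n)%N -> Tj p q n = Tj p q' n -> q = q'.
Proof. rewrite /Tj; case: ifP; case: ifP; lia. Qed.

Lemma cycf_step (g : nat -> int) (p q n : nat) (C : int) :
  (p < n)%N -> (q < n)%N ->
  (forall m, (m <= p)%N -> g m = 0) -> (forall m, (p < m <= n)%N -> g m = C) ->
  forall h, (h <= n)%N -> cycf g q n h = if (Tj p q n < h)%N then C else 0.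
Proof.
move=> pn qn g0 gC h hn; rewrite /cycf /Tj.
case: (leqP h (n - q)) => h1.
  case: (leqP q p) => h2.
    rewrite (g0 q) // subr0.
    case: (leqP (q + h) p) => h3.
      rewrite g0 //; case: ifP => //; lia.
    rewrite gC; last lia.
    case: ifP => //; lia.
  rewrite (gC q) ?(gC (q + h)) ?subrr; try lia.
  case: ifP => //; lia.
rewrite hn.
case: (leqP q p) => h2.
  rewrite (g0 q) // (g0 (h - (n - q))%N) ?(gC n) ?add0r ?subr0; try lia.
  case: ifP => //; lia.
rewrite (gC q) ?(gC n) ?addrK //; try lia.
case: (leqP (h - (n - q)) p) => h3.
  rewrite g0 //; case: ifP => //; lia.
rewrite gC; last lia.
case: ifP => //; lia.
Qed.

Lemma cycf_diag (g : nat -> int) (q n : nat) :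
  (q < n)%N -> (forall m, (m <= n)%N -> g m = - (m%:Z)) ->
  forall h, (h <= n)%N -> cycf g q n h = - (h%:Z).
Proof.
move=> qn gd h hn; rewrite /cycf.
case: (leqP h (n - q)) => h1.
  rewrite !gd; lia.
rewrite hn !gd; lia.
Qed.

Definition cfam d (x : xfam d) (k : 'I_d -> nat) (a i : 'I_d) : nat := absz (x a (k a) i).

Lemma x_nonneg d (x : xfam d) k : in_S x k ->
  forall a i, a != i -> forall h, (h <= k a)%N -> 0 <= x a h i.
Proof.
move=> [h0 [hm _]] a i ai; elim=> [|h IH] hk; first by rewrite h0.
exact: le_trans (IH (ltnW hk)) (hm a i ai h hk).
Qed.

Lemma cfamE d (x : xfam d) k : in_S x k -> forall a i, a != i ->
  x a (k a) i = (cfam x k a i)%:Z.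
Proof. by move=> hS a i ai; rewrite /cfam gez0_abs // (x_nonneg hS ai). Qed.

Lemma sumPosz (I : finType) (P : pred I) (F : I -> nat) :
  (\sum_(i | P i) F i)%N%:Z = \sum_(i | P i) (F i)%:Z.
Proof. by rewrite (big_morph Posz PoszD (erefl 0%:Z)). Qed.

Lemma prodPosz (I : finType) (P : pred I) (F : I -> nat) :
  (\prod_(i | P i) F i)%N%:Z = \prod_(i | P i) (F i)%:Z.
Proof. by rewrite (big_morph Posz PoszM (erefl 1%:Z)). Qed.

Lemma k_kk d r (x : xfam d) k : in_S x k -> is_solution r x k k ->
  (forall i h, (h <= k i)%N -> x i h i = - (h%:Z)) ->
  forall j, k j = kk r (cfam x k) j.
Proof.
move=> hS /andP[_ /forallP hs] hdiag j.
have := hs j; rewrite (bigD1 j) //= hdiag //.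
rewrite (eq_bigr (fun i => (cfam x k i j)%:Z)); last by move=> i ij; rewrite cfamE.
rewrite -sumPosz /kk => /eqP; lia.
Qed.

Lemma rhs_eq d r (x : xfam d) k : in_S x k ->
  \sum_(j : {ffun 'I_d -> option 'I_d} | in_D j) \prod_(i < d) kcoef r x k (j i) i
  = (\sum_(j : {ffun 'I_d -> option 'I_d} | in_D j) \prod_(i < d) cn r (cfam x k) (j i) i)%N%:Z.
Proof.
move=> hS; rewrite sumPosz; apply: eq_bigr => j /forallP hj.
rewrite prodPosz; apply: eq_bigr => i _.
have /andP[ji _] := hj i; rewrite /kcoef /cn; move: ji; case: (j i) => //= a ai.
rewrite cfamE //; apply: contraNneq ai => ->; by [].
Qed.

Lemma cyc_val d (x : xfam d) k (p q : 'I_d -> nat) :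
  in_S x k -> (forall i h, (h <= k i)%N -> x i h i = - (h%:Z)) ->
  (forall i, (p i < k i)%N) -> (forall i, (q i < k i)%N) ->
  (forall i h j, (h <= p i)%N -> j != i -> x i h j = 0) ->
  (forall i h j, ((p i).+1 <= h <= k i)%N -> j != i -> x i h j = x i (k i) j) ->
  forall i h j, (h <= k i)%N -> cyc x q k i h j =
    if j == i then - (h%:Z) else if (Tj (p i) (q i) (k i) < h)%N then (cfam x k i j)%:Z else 0.
Proof.
move=> hS hdiag pk qk h0 hC i h j hk; rewrite /cyc.
case: eqP => [->|/eqP ji].
  by apply: cycf_diag => // m mk; apply: hdiag.
rewrite -cfamE 1?eq_sym //; apply: cycf_step => // m mk.
  by apply: h0.
by apply: hC.
Qed.

Lemma sol_equiv d r (x : xfam d) k (p q : 'I_d -> nat) (s : 'I_d -> nat) :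
  in_S x k -> (forall i h, (h <= k i)%N -> x i h i = - (h%:Z)) ->
  (forall i, (p i < k i)%N) -> (forall i, (q i < k i)%N) ->
  (forall i h j, (h <= p i)%N -> j != i -> x i h j = 0) ->
  (forall i h j, ((p i).+1 <= h <= k i)%N -> j != i -> x i h j = x i (k i) j) ->
  (forall i, (s i <= k i)%N) ->
  (forall j, (r j)%:Z + \sum_(i < d) cyc x q k i (s i) j == 0) <->
  sol r (cfam x k) (fun i => Tj (p i) (q i) (k i)) s.
Proof.
move=> hS hdiag pk qk h0 hC sk.
have E j : \sum_(i < d) cyc x q k i (s i) j = - ((s j)%:Z) +
   (\sum_(i | i != j) (if (Tj (p i) (q i) (k i) < s i)%N then cfam x k i j else 0))%N%:Z.
  rewrite (bigD1 j) //= (cyc_val hS hdiag pk qk h0 hC) // eqxx; congr (_ + _).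
  rewrite sumPosz; apply: eq_bigr => i ij.
  rewrite (cyc_val hS hdiag pk qk h0 hC) // eq_sym (negbTE ij).
  by case: ifP.
split=> h j.
  have := h j; rewrite E => /eqP; lia.
by rewrite E (h j); apply/eqP; lia.
Qed.

Lemma smallest_equiv d r (x : xfam d) k (p q : 'I_d -> nat) :
  in_S x k -> (forall i h, (h <= k i)%N -> x i h i = - (h%:Z)) ->
  (forall i, (p i < k i)%N) -> (forall i, (q i < k i)%N) ->
  (forall i h j, (h <= p i)%N -> j != i -> x i h j = 0) ->
  (forall i h j, ((p i).+1 <= h <= k i)%N -> j != i -> x i h j = x i (k i) j) ->
  (forall i, k i = kk r (cfam x k) i) ->
  is_smallest_solution r (cyc x q k) k k <->
  exists L : {ffun 'I_d -> 'I_d}, good r (cfam x k) L (fun i => Tj (p i) (q i) (k i)).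
Proof.
move=> hS hdiag pk qk h0 hC hk.
have SE := sol_equiv r hS hdiag pk qk h0 hC.
split.
  move=> /andP[_ /forallP hmin]; apply: exists_good.
    by move=> i; rewrite -hk; apply: Tj_lt.
  move=> s sk hs i.
  have sk' : forall i, (s i < (k i).+1)%N by move=> i0; rewrite ltnS hk.
  pose S := ([ffun i => (Ordinal (sk' i) : 'I_(k i).+1)] : {dffun forall i : 'I_d, 'I_(k i).+1}).
  have SS : forall i, (S i : nat) = s i by move=> i0; rewrite ffunE.
  have := hmin S => /implyP; rewrite -hk.
  move=> /(_ _) /forallP H; rewrite -SS; apply: H.
  apply/andP; split; first by apply/forallP => i0; rewrite SS hk sk.
  apply/forallP; apply/SE; first by move=> i0; rewrite SS hk sk.
  move=> j; rewrite SS (hs j); congr (_ + _)%N; apply: eq_bigr => a _; by rewrite SS.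
move=> [L g]; apply/andP; split.
  apply/andP; split; first by apply/forallP.
  apply/forallP; apply/SE => // j.
  rewrite hk /kk; congr (_ + _)%N; apply: eq_bigr => i _.
  by rewrite Tj_lt.
apply/forallP => S; apply/implyP => /andP[_ /forallP hs]; apply/forallP => i.
have sk : forall i, ((S i : nat) <= k i)%N by move=> i0; rewrite -ltnS ltn_ord.
have hsol := (proj1 (sol_equiv r hS hdiag pk qk h0 hC sk) hs).
by rewrite (good_sol g hsol) hk.
Qed.

Lemma card_exists_good d r c (k : 'I_d -> nat) :
  #|[pred t : {dffun forall i : 'I_d, 'I_(k i)} |
      [exists L : {ffun 'I_d -> 'I_d}, good r c L (fun i => nat_of_ord (t i))]]|
  = (\sum_(L : {ffun 'I_d -> 'I_d})
      #|[pred t : {dffun forall i : 'I_d, 'I_(k i)} | good r c L (fun i => nat_of_ord (t i))]|)%N.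
Proof.
rewrite -sum1_card; under [RHS]eq_bigr do rewrite -sum1_card.
rewrite (exchange_big_dep (fun t : {dffun forall i : 'I_d, 'I_(k i)} =>
   [exists L : {ffun 'I_d -> 'I_d}, good r c L (fun i => nat_of_ord (t i))])) /=; last first.
  by move=> L t _ g; apply/existsP; exists L.
apply: eq_bigr => t /existsP[L0 g0].
rewrite (big_pred1 L0) // => L /=; rewrite inE; apply/idP/eqP => [g|->//].
exact: good_uniq g g0.
Qed.

Theorem lemma4p4 (d : nat) (hd : (2 <= d)%N) (r : 'I_d -> nat)
  (hr : exists i, (0 < r i)%N) (x : xfam d) (k : 'I_d -> nat)
  (hx : in_Sbar r x k) (hsimple : simple_system x k) :
  (#|[pred q : {dffun forall i : 'I_d, 'I_(k i)} |
       is_smallest_solution r (cyc x (fun i => nat_of_ord (q i)) k) k k]|)%:Z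
  = \sum_(j : {ffun 'I_d -> option 'I_d} | in_D j)
       \prod_(i < d) kcoef r x k (j i) i.
Proof.
case: hx => hS [kpos [hsm hdiag]].
pose hcid i := constructive_indefinite_description _ (hsimple i).
pose p i := proj1_sig (hcid i).
have hp i := proj2_sig (hcid i).
have pk i : (p i < k i)%N.
  have [h _] := hp i; move: h (kpos i); rewrite -/(p i); lia.
have h0 i h j : (h <= p i)%N -> j != i -> x i h j = 0.
  by have [_ [H _]] := hp i; apply: H.
have hC i h j : ((p i).+1 <= h <= k i)%N -> j != i -> x i h j = x i (k i) j.
  by have [_ [_ H]] := hp i; apply: H.
have hk := k_kk hS (proj1 (andP hsm)) hdiag.
rewrite rhs_eq // -forest_sum; congr Posz.
rewrite (eq_bigr _ (fun L _ => esym (card_good L hk))) -card_exists_good.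
pose Tf (q : {dffun forall i : 'I_d, 'I_(k i)}) : {dffun forall i : 'I_d, 'I_(k i)} :=
  [ffun i => (Ordinal (Tj_lt (pk i) (ltn_ord (q i))) : 'I_(k i))].
have TfE q i : (Tf q i : nat) = Tj (p i) (q i) (k i) by rewrite ffunE.
have Tinj : injective Tf.
  move=> q q' e; apply/ffunP => i; apply: val_inj.
  apply: (Tj_inj (pk i) (ltn_ord _) (ltn_ord _)); by rewrite -!TfE e.
rewrite -!sum1_card [RHS](reindex_inj Tinj); apply: eq_bigl => q; rewrite !inE.
apply/idP/idP.
  move=> /(smallest_equiv hS hdiag pk (fun i => ltn_ord (q i)) h0 hC hk) [L g].
  apply/existsP; exists L; apply: etrans g; apply: eq_forallb => i.
  by rewrite !TfE.
move=> /existsP[L g]; apply/(smallest_equiv hS hdiag pk (fun i => ltn_ord (q i)) h0 hC hk).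
exists L; apply: etrans g; apply: eq_forallb => i; by rewrite !TfE.
Qed.
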